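(* Let $G$ be a commutative group, $H$ its torsion subgroup, $G'=G/H$, $\varphi:G\to G'$ the natural homomorphism, $U\subset G$ finite and $U'=\varphi(U)$. Let $\vartheta$ be any of the functionals $\alpha,\alpha',\alpha'',\beta,\beta',\beta''$, with $\vartheta(U)$ computed in $G$ and $\vartheta(U')$ in $G'$. Then $\vartheta(U')\ge\vartheta(U)$.
   Context: For a finite set $U$ in a commutative group $K$, with $A,B$ ranging over nonempty finite subsets of $K$: $\alpha(U)=\inf_{A\supset U,B\supset U}\frac{|A+B|}{\sqrt{|A||B|}}$; $\alpha'(U)=\inf_{A\supset U,B\supset U,|A|=|B|}\frac{|A+B|}{|A|}$; $\alpha''(U)=\inf_{A\supset U}\frac{|A+A|}{|A|}$; $\beta(U)=\inf_{A,B}\frac{|A+B+U|}{\sqrt{|A||B|}}$; $\beta'(U)=\inf_{A,B,|A|=|B|}\frac{|A+B+U|}{\sqrt{|A||B|}}$; $\beta''(U)=\inf_A\frac{|A+A+U|}{|A|}$. *)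

(* Defs.v *)
From HB Require Import structures.
From mathcomp Require Import all_boot all_order all_algebra.
From mathcomp Require Import finmap.
From mathcomp Require Import boolp classical_sets reals.

Set Implicit Arguments.
Unset Strict Implicit.
Unset Printing Implicit Defensive.

Import Order.TTheory GRing.Theory Num.Theory.
Local Open Scope ring_scope.
Local Open Scope fset_scope.

Definition sumset (K : zmodType) (A B : {fset K}) : {fset K} :=
  [fset (a + b)%R | a in A, b in B].

Definition fimage (K K' : zmodType) (f : K -> K') (U : {fset K}) : {fset K'} :=
  [fset f u | u in U].

Definition torsion (K : zmodType) (x : K) : Prop :=
  exists n : nat, (0 < n)%N /\ x *+ n = 0.

Section Functionals.
Variables (R : realType) (K : zmodType).

Definition alpha (U : {fset K}) : R :=
  inf [set r : R | exists A B : {fset K},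
        [/\ A != fset0, B != fset0, fsubset U A, fsubset U B &
            r = (#|` sumset A B|)%:R / Num.sqrt ((#|` A|)%:R * (#|` B|)%:R)]].

Definition alpha' (U : {fset K}) : R :=
  inf [set r : R | exists A B : {fset K},
        [/\ A != fset0, B != fset0, fsubset U A /\ fsubset U B,
            #|` A| = #|` B| &
            r = (#|` sumset A B|)%:R / (#|` A|)%:R]].

Definition alpha'' (U : {fset K}) : R :=
  inf [set r : R | exists A : {fset K},
        [/\ A != fset0, fsubset U A &
            r = (#|` sumset A A|)%:R / (#|` A|)%:R]].

Definition beta (U : {fset K}) : R :=
  inf [set r : R | exists A B : {fset K},
        [/\ A != fset0, B != fset0 &
            r = (#|` sumset (sumset A B) U|)%:R
                / Num.sqrt ((#|` A|)%:R * (#|` B|)%:R)]].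

Definition beta' (U : {fset K}) : R :=
  inf [set r : R | exists A B : {fset K},
        [/\ A != fset0, B != fset0, #|` A| = #|` B| &
            r = (#|` sumset (sumset A B) U|)%:R
                / Num.sqrt ((#|` A|)%:R * (#|` B|)%:R)]].

Definition beta'' (U : {fset K}) : R :=
  inf [set r : R | exists A : {fset K},
        A != fset0 /\ r = (#|` sumset (sumset A A) U|)%:R / (#|` A|)%:R].

End Functionals.

(* Main.v *)
Require Import Defs.
From HB Require Import structures.
From mathcomp Require Import all_boot all_order all_algebra.
From mathcomp Require Import finmap.
From mathcomp Require Import boolp classical_sets reals.
Import Order.TTheory GRing.Theory Num.Theory.
Local Open Scope fset_scope.
Local Open Scope ring_scope.
Lemma sumsetP (K : zmodType) (A B : {fset K}) x :
  reflect (exists a b, [/\ a \in A, b \in B & x = a + b]) (x \in sumset A B).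
Proof.
apply: (iffP (imfset2P _ _ _ _ _)) => [[a Ha [b Hb ->]]|[a [b [Ha Hb ->]]]].
  by exists a, b.
by exists a => //; exists b.
Qed.
Lemma card_sumset_le (K : zmodType) (A B : {fset K}) :
  (#|` sumset A B| <= #|` A| * #|` B|)%N.
Proof.
rewrite /sumset unlock /= size_seq_fset.
by apply: leq_trans (size_undup _) _; rewrite size_allpairs.
Qed.
Lemma card_sumset_inj (K : zmodType) (A B : {fset K}) :
  (forall a b a' b', a \in A -> b \in B -> a' \in A -> b' \in B -> a + b = a' + b' -> a = a' /\ b = b') ->
  #|` sumset A B| = (#|` A| * #|` B|)%N.
Proof.
move=> Hinj.
rewrite /sumset unlock /= size_seq_fset undup_id.
  by rewrite size_allpairs.
apply: allpairs_uniq; rewrite ?fset_uniq //.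
move=> [a b] [a' b'] /allpairsP [[x y] /= [Hx Hy [-> ->]]] /allpairsP [[x' y'] /= [Hx' Hy' [-> ->]]] /= E.
by have [-> ->] := Hinj _ _ _ _ Hx Hy Hx' Hy' E.
Qed.
Lemma mulrn_mod {G : zmodType} {x : G} {n} k : x *+ n = 0 -> x *+ k = x *+ (k %% n).
Proof.
move=> Hn; rewrite {1}(divn_eq k n) mulrnDr mulnC mulrnA Hn mul0rn add0r.
done.
Qed.

Lemma torsion_hull (G : zmodType) (s : seq G) :
  (forall x, x \in s -> torsion x) ->
  exists T : {fset G}, [/\ 0 \in T, forall a b, a \in T -> b \in T -> a + b \in T,
     {subset s <= T} & forall t, t \in T -> torsion t].
Proof.
elim: s => [|x s IH] H.
  exists [fset 0]; split => //.
  - by rewrite in_fset1.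
  - by move=> a b; rewrite !in_fset1 => /eqP -> /eqP ->; rewrite addr0.
  - by move=> t; rewrite in_fset1 => /eqP ->; exists 1%N; rewrite mulr1n.
have [T [T0 TD Ts Tt]] : exists T : {fset G}, [/\ 0 \in T, forall a b, a \in T -> b \in T -> a + b \in T,
     {subset s <= T} & forall t, t \in T -> torsion t].
  by apply: IH => y ys; apply: H; rewrite inE ys orbT.
have [n [n0 xn]] : torsion x by apply: H; rewrite inE eqxx.
pose M := [fset x *+ j | j in iota 0 n].
have inM k : x *+ k \in M.
  rewrite (mulrn_mod k xn); apply/imfsetP; exists (k %% n)%N => //=.
  by rewrite mem_iota add0n ltn_pmod.
exists (sumset T M); split.
- by apply/sumsetP; exists 0, 0; split => //; [rewrite -(mulr0n x) | rewrite addr0].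
- move=> a b /sumsetP [t1 [m1 [Ht1 /imfsetP [j1 _ ->] ->]]] /sumsetP [t2 [m2 [Ht2 /imfsetP [j2 _ ->] ->]]].
  apply/sumsetP; exists (t1 + t2), (x *+ (j1 + j2)); split; first by apply: TD.
    exact: inM.
  by rewrite mulrnDr addrACA.
- move=> y; rewrite inE => /orP [/eqP ->|ys].
    by apply/sumsetP; exists 0, (x *+ 1); split; [done | apply: inM | rewrite add0r mulr1n].
  by apply/sumsetP; exists y, (x *+ 0); split; [apply: Ts | apply: inM | rewrite mulr0n addr0].
- move=> y /sumsetP [t [m [Ht /imfsetP [j _ ->] ->]]].
  have [p [p0 tp]] := Tt _ Ht.
  exists (p * n)%N; split; first by rewrite muln_gt0 p0.
  rewrite mulrnDl mulrnA tp mul0rn add0r -mulrnA.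
  by rewrite (mulrn_mod _ xn) mulnA modnMl mulr0n.
Qed.
Section Lift.
Variables (G G' : zmodType) (phi : {additive G -> G'}).
Hypothesis phi_surj : forall y : G', exists x : G, phi x = y.
Hypothesis phi_ker : forall x : G, phi x = 0 <-> torsion x.

Lemma lift (A' B' : {fset G'}) (U : {fset G}) : exists A B T : {fset G},
 [/\ (#|`A| = #|`A'| * #|`T|)%N, (#|`B| = #|`B'| * #|`T|)%N, (0 < #|`T|)%N,
     (#|` sumset A B| <= #|` sumset A' B'| * #|`T|)%N &
     (#|` sumset (sumset A B) U| <= #|` sumset (sumset A' B') (fimage phi U)| * #|`T|)%N ] /\
 [/\ fsubset (fimage phi U) A' -> fsubset U A, fsubset (fimage phi U) B' -> fsubset U B & A' = B' -> A = B].
Proof.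
have [s Hs] := choice phi_surj.
pose W' := A' `|` B' `|` sumset A' B' `|` fimage phi U.
pose ds := [seq s x + s y - s (x + y) | x <- W', y <- W'] ++ [seq u - s (phi u) | u <- U].
have [T [T0 TD Tds Tt]] : exists T : {fset G}, [/\ 0 \in T, forall a b, a \in T -> b \in T -> a + b \in T,
     {subset ds <= T} & forall t, t \in T -> torsion t].
  apply: torsion_hull => d; rewrite mem_cat => /orP [/allpairsP [[x y] /= [_ _ ->]]|/mapP [u _ ->]];
    apply/phi_ker; by rewrite ?raddfB ?raddfD !Hs ?subrr.
have phiT t : t \in T -> phi t = 0 by move=> /Tt /phi_ker.
have defect x y : x \in W' -> y \in W' -> exists2 d, d \in T & s x + s y = s (x + y) + d.
  move=> Hx Hy; exists (s x + s y - s (x + y)); last by rewrite [RHS]addrC subrK.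
  by apply: Tds; rewrite mem_cat; apply/orP; left; apply/allpairsP; exists (x, y).
have hU u : u \in U -> exists2 h, h \in T & u = s (phi u) + h.
  move=> Hu; exists (u - s (phi u)); last by rewrite [RHS]addrC subrK.
  by apply: Tds; rewrite mem_cat; apply/orP; right; apply/mapP; exists u.
have s_inj : injective s by apply: (can_inj Hs).
have cardS X : #|` fimage s X| = #|` X|.
  by rewrite /fimage card_imfset.
have cardA X : #|` sumset (fimage s X) T| = (#|` X| * #|` T|)%N.
  rewrite card_sumset_inj ?cardS // => a t a' t' /imfsetP [x _ ->] Ht /imfsetP [x' _ ->] Ht' E.
  have Ex : x = x'.
    by move: (congr1 phi E); rewrite !raddfD !Hs !phiT ?addr0.
  by subst x'; split => //; move: E; apply: addrI.
set A := sumset (fimage s A') T; set B := sumset (fimage s B') T.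
have inW1 x : x \in A' -> x \in W' by move=> H; rewrite /W' !inE H.
have inW2 x : x \in B' -> x \in W' by move=> H; rewrite /W' !inE H !orbT.
have inW3 x : x \in sumset A' B' -> x \in W' by move=> H; rewrite /W' !inE H !orbT.
have inW4 x : x \in fimage phi U -> x \in W' by move=> H; rewrite /W' !inE H !orbT.
have ABdec z : z \in sumset A B -> exists c e, [/\ c \in sumset A' B', e \in T & z = s c + e].
  move=> /sumsetP [a [b [/sumsetP [sa [t1 [/imfsetP [x Hx ->] Ht1 ->]]] /sumsetP [sb [t2 [/imfsetP [y Hy ->] Ht2 ->]]] ->]]].
  have [d Hd E] := defect x y (inW1 _ Hx) (inW2 _ Hy).
  exists (x + y), (d + (t1 + t2)); split.
  - by apply/sumsetP; exists x, y.
  - by apply: (TD) => //; apply: (TD).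
  - by rewrite addrACA E -addrA.
exists A, B, T; split; split.
- exact: cardA.
- exact: cardA.
- by rewrite lt0n cardfs_eq0; apply/fset0Pn; exists 0.
- rewrite -cardA; apply: fsubset_leq_card; apply/fsubsetP => z /ABdec [c [e [Hc He ->]]].
  by apply/sumsetP; exists (s c), e; split => //; apply/imfsetP; exists c.
- rewrite -cardA; apply: fsubset_leq_card; apply/fsubsetP => z.
  move=> /sumsetP [ab [u [/ABdec [c [e [Hc He ->]]] Hu ->]]].
  have [h Hh Eu] := hU u Hu.
  have Hpu : phi u \in fimage phi U by apply/imfsetP; exists u.
  have [d Hd E] := defect c (phi u) (inW3 _ Hc) (inW4 _ Hpu).
  apply/sumsetP; exists (s (c + phi u)), (d + (e + h)); split.
  + by apply/imfsetP; exists (c + phi u) => //; apply/sumsetP; exists c, (phi u).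
  + by apply: (TD) => //; apply: (TD).
  + by rewrite {1}Eu addrACA E -addrA.
- move=> /fsubsetP HU; apply/fsubsetP => u Hu.
  have [h Hh Eu] := hU u Hu.
  apply/sumsetP; exists (s (phi u)), h; split => //.
  by apply/imfsetP; exists (phi u) => //; apply: HU; apply/imfsetP; exists u.
- move=> /fsubsetP HU; apply/fsubsetP => u Hu.
  have [h Hh Eu] := hU u Hu.
  apply/sumsetP; exists (s (phi u)), h; split => //.
  by apply/imfsetP; exists (phi u) => //; apply: HU; apply/imfsetP; exists u.
- by move=> EAB; rewrite /A /B EAB.
Qed.
End Lift.
From mathcomp Require Import ring lra.
Lemma ratio_le1 (R : realType) (a t m m' : nat) : (0 < a)%N -> (0 < t)%N -> (m <= m' * t)%N ->
  (m%:R / (a * t)%:R : R) <= m'%:R / a%:R.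
Proof.
move=> a0 t0 Hm.
have a0' : (0 : R) < a%:R by rewrite ltr0n.
have t0' : (0 : R) < t%:R by rewrite ltr0n.
rewrite natrM ler_pdivrMr ?mulr_gt0 //.
have -> : m'%:R / a%:R * (a%:R * t%:R) = (m' * t)%:R :> R.
  rewrite natrM; field; by rewrite gt_eqF.
by rewrite ler_nat.
Qed.
Lemma ratio_le2 (R : realType) (a b t m m' : nat) : (0 < a)%N -> (0 < b)%N -> (0 < t)%N -> (m <= m' * t)%N ->
  (m%:R / Num.sqrt ((a * t)%:R * (b * t)%:R) : R) <= m'%:R / Num.sqrt (a%:R * b%:R).
Proof.
move=> a0 b0 t0 Hm.
have a0' : (0 : R) < a%:R by rewrite ltr0n.
have b0' : (0 : R) < b%:R by rewrite ltr0n.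
have t0' : (0 : R) < t%:R by rewrite ltr0n.
have S0 : 0 < Num.sqrt (a%:R * b%:R : R) by rewrite sqrtr_gt0 mulr_gt0.
have -> : Num.sqrt ((a * t)%:R * (b * t)%:R) = Num.sqrt (a%:R * b%:R) * t%:R :> R.
  rewrite !natrM (_ : _ * _ * _ = (a%:R * b%:R) * t%:R ^+ 2); last by ring.
  by rewrite sqrtrM ?mulr_ge0 ?ler0n // sqrtr_sqr ger0_norm // ltW.
rewrite ler_pdivrMr ?mulr_gt0 //.
have -> : m'%:R / Num.sqrt (a%:R * b%:R) * (Num.sqrt (a%:R * b%:R) * t%:R) = (m' * t)%:R :> R.
  rewrite natrM; field; by rewrite gt_eqF.
by rewrite ler_nat.
Qed.
Lemma inf_mono (R : realType) (S S' : set R) : (forall r, S r -> 0 <= r) -> (exists r, S' r) ->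
  (forall r', S' r' -> exists2 r, S r & r <= r') -> inf S <= inf S'.
Proof.
move=> S0 [x Hx] H; apply: lb_le_inf; first by exists x.
move=> r' /H [r Sr le]; apply: le_trans le.
by apply: ge_inf => //; exists 0.
Qed.
Close Scope fset_scope.
Theorem mainTheorem18 (R : realType) (G G' : zmodType)
    (phi : {additive G -> G'})
    (phi_surj : forall y : G', exists x : G, phi x = y)
    (phi_ker : forall x : G, phi x = 0 <-> torsion x)
    (U : {fset G}) :
  let U' := fimage phi U in
  [/\ alpha R U <= alpha R U',
      alpha' R U <= alpha' R U' &
      alpha'' R U <= alpha'' R U'] /\
  [/\ beta R U <= beta R U',
      beta' R U <= beta' R U' &
      beta'' R U <= beta'' R U'].
Proof.
move=> U'.
have nz (K : zmodType) (X : {fset K}) : (X != fset0) = (0 < #|`X|)%N by rewrite lt0n cardfs_eq0.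
have Z0 (K : zmodType) : ([fset (0 : K)]%fset : {fset K}) != fset0 by apply/fset0Pn; exists 0; rewrite in_fset1.
have Z1 (K : zmodType) (V : {fset K}) : (V `|` [fset 0])%fset != fset0.
  by apply/fset0Pn; exists 0; rewrite in_fsetU in_fset1 eqxx orbT.
have Z2 (K : zmodType) (V : {fset K}) : fsubset V (V `|` [fset 0])%fset by apply: fsubsetUl.
split; split; apply: inf_mono.
- by move=> r [A [B [_ _ _ _ ->]]]; rewrite divr_ge0 ?sqrtr_ge0.
- by eexists; exists (U' `|` [fset 0])%fset, (U' `|` [fset 0])%fset; split.
- move=> r [A' [B' [nA nB sA sB ->]]].
  have [A [B [T [[cA cB T0 cAB cABU] [sUA sUB eAB]]]]] := @lift _ _ phi phi_surj phi_ker A' B' U.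
  eexists; first by exists A, B; split; [rewrite nz cA muln_gt0 -nz nA | rewrite nz cB muln_gt0 -nz nB | exact: sUA sA | exact: sUB sB |].
  by rewrite cA cB; apply: ratio_le2; rewrite // -nz.
- by move=> r [A [B [_ _ _ _ ->]]]; rewrite divr_ge0.
- by eexists; exists (U' `|` [fset 0])%fset, (U' `|` [fset 0])%fset; split.
- move=> r [A' [B' [nA nB [sA sB] eq ->]]].
  have [A [B [T [[cA cB T0 cAB cABU] [sUA sUB eAB]]]]] := @lift _ _ phi phi_surj phi_ker A' B' U.
  eexists; first by exists A, B; split; [rewrite nz cA muln_gt0 -nz nA | rewrite nz cB muln_gt0 -nz nB | split; [exact: sUA sA | exact: sUB sB] | rewrite cA cB eq |].
  by rewrite cA; apply: ratio_le1; rewrite // -nz.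
- by move=> r [A [_ _ ->]]; rewrite divr_ge0.
- by eexists; exists (U' `|` [fset 0])%fset; split.
- move=> r [A' [nA sA ->]].
  have [A [B [T [[cA cB T0 cAB cABU] [sUA sUB eAB]]]]] := @lift _ _ phi phi_surj phi_ker A' A' U.
  have eB := eAB erefl; subst B.
  eexists; first by exists A; split; [rewrite nz cA muln_gt0 -nz nA | exact: sUA sA |].
  by rewrite cA; apply: ratio_le1; rewrite // -nz.
- by move=> r [A [B [_ _ ->]]]; rewrite divr_ge0 ?sqrtr_ge0.
- by eexists; exists [fset 0]%fset, [fset 0]%fset; split.
- move=> r [A' [B' [nA nB ->]]].
  have [A [B [T [[cA cB T0 cAB cABU] [sUA sUB eAB]]]]] := @lift _ _ phi phi_surj phi_ker A' B' U.
  eexists; first by exists A, B; split; [rewrite nz cA muln_gt0 -nz nA | rewrite nz cB muln_gt0 -nz nB |].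
  by rewrite cA cB; apply: ratio_le2; rewrite // -nz.
- by move=> r [A [B [_ _ _ ->]]]; rewrite divr_ge0 ?sqrtr_ge0.
- by eexists; exists [fset 0]%fset, [fset 0]%fset; split.
- move=> r [A' [B' [nA nB eq ->]]].
  have [A [B [T [[cA cB T0 cAB cABU] [sUA sUB eAB]]]]] := @lift _ _ phi phi_surj phi_ker A' B' U.
  eexists; first by exists A, B; split; [rewrite nz cA muln_gt0 -nz nA | rewrite nz cB muln_gt0 -nz nB | rewrite cA cB eq |].
  by rewrite cA cB; apply: ratio_le2; rewrite // -nz.
- by move=> r [A [_ ->]]; rewrite divr_ge0.
- by eexists; exists [fset 0]%fset; split.
- move=> r [A' [nA ->]].
  have [A [B [T [[cA cB T0 cAB cABU] [sUA sUB eAB]]]]] := @lift _ _ phi phi_surj phi_ker A' A' U.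
  have eB := eAB erefl; subst B.
  eexists; first by exists A; split; [rewrite nz cA muln_gt0 -nz nA |].
  by rewrite cA; apply: ratio_le1; rewrite // -nz.
Qed.
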